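(* Fix $K\ge1$ and $\alpha,\beta_1,\beta_2>0$. There exists a constant $C$ such that for all $n\ge2$ and every symmetric $0/1$ matrix $A$ of size $n\times n$ with zero diagonal, $$\max_{e\in\{1,\dots,K\}^n}\big|Q_B(e)-Q_{ML}(e)-Q_P(e)\big|\le\frac{C\log n}{n^2},$$ where $Q_P(e)=\frac1{n^2}\sum_{a:\,n_a(e)+\lfloor\alpha\rfloor\ge2}n_a(e)\log n_a(e)-\frac1n$. Consequently $\max_{e}|Q_B(e)-Q_{ML}(e)|=O(\log n/n)$.
   Context: For a labelling $e$: $n_a(e)=\#\{i:e_i=a\}$; $O_{ab}(e)=\sum_{i,j}A_{ij}1\{e_i=a,e_j=b\}$ for $a\ne b$, $O_{aa}(e)=\sum_{i<j}A_{ij}1\{e_i=e_j=a\}$; $n_{ab}(e)=n_a(e)n_b(e)$ for $a\ne b$, $n_{aa}(e)=\frac12n_a(e)(n_a(e)-1)$. Bayesian modularity: $Q_B(e)=\frac1{n^2}\sum_{1\le a\le b\le K}\log B\big(O_{ab}(e)+\beta_1,n_{ab}(e)-O_{ab}(e)+\beta_2\big)+\frac1{n^2}\sum_{a=1}^K\log\Gamma(n_a(e)+\alpha)$, $B$ the beta function. Likelihood modularity: $Q_{ML}(e)=\frac1{n^2}\sum_{1\le a\le b\le K}n_{ab}(e)\,\tau\big(O_{ab}(e)/n_{ab}(e)\big)$ with $\tau(x)=x\log x+(1-x)\log(1-x)$, $0\log0=0$, and terms with $n_{ab}(e)=0$ taken as $0$. *)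

(* Defs.v *)
From Stdlib Require Import Reals.
From Coquelicot Require Import Coquelicot.
Open Scope R_scope.

Fixpoint rsum (n : nat) (f : nat -> R) : R :=
  match n with O => 0 | S m => rsum m f + f m end.

Definition Gamma (x : R) : R :=
  RInt_gen (fun t => Rpower t (x - 1) * exp (- t)) (at_right 0) (Rbar_locally p_infty).

Definition Beta (x y : R) : R := Gamma x * Gamma y / Gamma (x + y).

Definition xlnx (x : R) : R := if Req_EM_T x 0 then 0 else x * ln x.

Definition tau (x : R) : R := xlnx x + xlnx (1 - x).

Definition ind (b : bool) : R := if b then 1 else 0.

(* Nodes are 0..n-1, communities are 1..K. *)
Definition adjacency (n : nat) (A : nat -> nat -> R) : Prop :=
  (forall i j, (i < n)%nat -> (j < n)%nat -> A i j = 0 \/ A i j = 1) /\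
  (forall i j, (i < n)%nat -> (j < n)%nat -> A i j = A j i) /\
  (forall i, (i < n)%nat -> A i i = 0).

Definition labelling (n K : nat) (e : nat -> nat) : Prop :=
  forall i, (i < n)%nat -> (1 <= e i <= K)%nat.

Definition n_a (n : nat) (e : nat -> nat) (a : nat) : R :=
  rsum n (fun i => ind (Nat.eqb (e i) a)).

Definition O_ab (n : nat) (A : nat -> nat -> R) (e : nat -> nat) (a b : nat) : R :=
  if Nat.eqb a b then
    rsum n (fun j => rsum j (fun i => A i j * ind (Nat.eqb (e i) a) * ind (Nat.eqb (e j) a)))
  else
    rsum n (fun i => rsum n (fun j => A i j * ind (Nat.eqb (e i) a) * ind (Nat.eqb (e j) b))).

Definition n_ab (n : nat) (e : nat -> nat) (a b : nat) : R :=
  if Nat.eqb a b then n_a n e a * (n_a n e a - 1) / 2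
  else n_a n e a * n_a n e b.

(* sum over 1 <= a <= b <= K *)
Definition sum_pairs (K : nat) (F : nat -> nat -> R) : R :=
  rsum K (fun b' => rsum (S b') (fun a' => F (S a') (S b'))).

Definition sum_classes (K : nat) (F : nat -> R) : R := rsum K (fun a' => F (S a')).

Definition Q_B (n K : nat) (alpha b1 b2 : R) (A : nat -> nat -> R) (e : nat -> nat) : R :=
  / (INR n ^ 2) * sum_pairs K (fun a b =>
      ln (Beta (O_ab n A e a b + b1) (n_ab n e a b - O_ab n A e a b + b2)))
  + / (INR n ^ 2) * sum_classes K (fun a => ln (Gamma (n_a n e a + alpha))).

Definition Q_ML (n K : nat) (A : nat -> nat -> R) (e : nat -> nat) : R :=
  / (INR n ^ 2) * sum_pairs K (fun a b =>
      if Req_EM_T (n_ab n e a b) 0 then 0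
      else n_ab n e a b * tau (O_ab n A e a b / n_ab n e a b)).

(* floor alpha = Int_part alpha *)
Definition Q_P (n K : nat) (alpha : R) (e : nat -> nat) : R :=
  / (INR n ^ 2) * sum_classes K (fun a =>
      if Rle_dec 2 (n_a n e a + IZR (Int_part alpha)) then xlnx (n_a n e a) else 0)
  - / INR n.

(* Main.v *)
Require Import Defs.
From Stdlib Require Import Reals Lra Psatz Lia Bool.
From Coquelicot Require Import Coquelicot.
Import Defs.
Open Scope R_scope.

Lemma gen_exists (f : R -> R) (M : R) :
  (forall t, 0 < t -> continuous f t) -> (forall t, 0 < t -> 0 <= f t) ->
  (forall a b, 0 < a < b -> RInt f a b <= M) ->
  exists L, is_RInt_gen f (at_right 0) (Rbar_locally p_infty) L /\ L <= M /\
    (forall a b, 0 < a < b -> RInt f a b <= L).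
Proof.
intros Hc Hp HM.
assert (Hex : forall a b, 0 < a -> 0 < b -> ex_RInt f a b).
{ intros a b Ha Hb. apply (ex_RInt_continuous (V:=R_CompleteNormedModule)). intros z Hz. apply Hc.
  assert (0 < Rmin a b) by (apply Rmin_glb_lt; lra). lra. }
set (E := fun r => exists a b, 0 < a < b /\ r = RInt f a b).
assert (HB : bound E) by (exists M; intros r [a [b [Hab ->]]]; now apply HM).
assert (HE : exists r, E r) by (exists (RInt f 1 2), 1, 2; split; [lra|auto]).
destruct (completeness E HB HE) as [L [HL1 HL2]].
exists L; split; [|split].
- intros P [eps HP].
  assert (Hlt : exists a0 b0, 0 < a0 < b0 /\ L - eps < RInt f a0 b0).
  { apply Classical_Prop.NNPP. intros Hn0.
    assert (Hn : forall r, ~ (E r /\ L - eps < r)).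
    { intros r [[a [b [Hab ->]]] Hr]. apply Hn0. exists a, b. split; auto. }
    assert (L <= L - eps); [|destruct eps; simpl in *; lra].
    apply HL2. intros r [a [b [Hab ->]]].
    destruct (Rle_dec (RInt f a b) (L - eps)) as [h|h]; auto.
    exfalso; apply (Hn (RInt f a b)); split; [exists a, b; split; [lra|auto]|lra]. }
  destruct Hlt as [a0 [b0 [Hab0 Hgt]]].
  assert (Ha0 : 0 < a0) by lra.
  apply (Filter_prod _ _ _ (fun a => 0 < a < a0) (fun b => b0 < b)).
  + unfold at_right, within. exists (mkposreal a0 Ha0). simpl. intros y Hy Hy0. split; auto.
    change (Rabs (y - 0) < a0) in Hy. apply Rabs_lt_between in Hy. lra.
  + exists b0. auto.
  + intros a b Ha Hb. simpl. exists (RInt f a b). split.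
    * exact (RInt_correct (V:=R_CompleteNormedModule) f a b (Hex a b ltac:(lra) ltac:(lra))).
    * apply HP. change (Rabs (RInt f a b - L) < eps).
      assert (H1 : RInt f a b <= L) by (apply HL1; exists a, b; split; [lra|auto]).
      assert (H2 : RInt f a0 b0 <= RInt f a b).
      { rewrite <- (RInt_Chasles f a a0 b) by (apply Hex; lra).
        rewrite <- (RInt_Chasles f a0 b0 b) by (apply Hex; lra).
        assert (0 <= RInt f a a0) by (apply RInt_ge_0; [lra|apply Hex; lra|intros; apply Hp; lra]).
        assert (0 <= RInt f b0 b) by (apply RInt_ge_0; [lra|apply Hex; lra|intros; apply Hp; lra]).
        unfold plus; simpl. lra. }
      apply Rabs_lt_between; lra.
- apply HL2. intros r [a [b [Hab ->]]]. now apply HM.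
- intros a b Hab. apply HL1. exists a, b; auto.
Qed.

Definition gf (x t : R) := Rpower t (x - 1) * exp (- t).

Lemma gf_cont x t : 0 < t -> continuous (gf x) t.
Proof.
intros Ht. apply (ex_derive_continuous (K:=R_AbsRing) (V:=R_NormedModule)). unfold gf, Rpower. auto_derive. lra.
Qed.

Lemma gf_pos x t : 0 < gf x t.
Proof. unfold gf, Rpower. apply Rmult_lt_0_compat; apply exp_pos. Qed.

Lemma Gamma_char x M : 0 < x -> (forall a b, 0 < a < b -> RInt (gf x) a b <= M) ->
  Gamma x <= M /\ (forall a b, 0 < a < b -> RInt (gf x) a b <= Gamma x).
Proof.
intros Hx HM.
destruct (gen_exists (gf x) M (gf_cont x) (fun t _ => Rlt_le _ _ (gf_pos x t)) HM)
  as [L [HL [HLM HLa]]].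
assert (E : Gamma x = L).
{ unfold Gamma. apply (is_RInt_gen_unique (V:=R_CompleteNormedModule)). exact HL. }
rewrite E. auto.
Qed.

Lemma exRI (f : R -> R) a b : a <= b -> (forall t, a <= t <= b -> continuous f t) -> ex_RInt f a b.
Proof.
intros Hab H. apply (ex_RInt_continuous (V:=R_CompleteNormedModule)).
intros z Hz. rewrite Rmin_left, Rmax_right in Hz by lra. auto.
Qed.

Lemma RI_deriv (G g : R -> R) a b : a <= b ->
  (forall t, a <= t <= b -> is_derive G t (g t)) ->
  (forall t, a <= t <= b -> continuous g t) -> RInt g a b = G b - G a.
Proof.
intros Hab Hd Hc. apply (is_RInt_unique (V:=R_CompleteNormedModule)).
apply (is_RInt_derive (V:=R_CompleteNormedModule)).
- intros z Hz. rewrite Rmin_left, Rmax_right in Hz by lra. auto.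
- intros z Hz. rewrite Rmin_left, Rmax_right in Hz by lra. auto.
Qed.

Lemma ln_le_sub1 y : 0 < y -> ln y <= y - 1.
Proof.
intros Hy. rewrite <- (ln_exp (y - 1)). apply ln_le; auto.
generalize (exp_ineq1_le (y - 1)); lra.
Qed.

Lemma cont_of_der (f : R -> R) t : ex_derive f t -> continuous f t.
Proof. apply (ex_derive_continuous (K:=R_AbsRing) (V:=R_NormedModule)). Qed.

Lemma exp_le_exp' a b : a <= b -> exp a <= exp b.
Proof. intros [h|h]; [left; now apply exp_increasing| subst; lra]. Qed.

Lemma exp_le_1 z : z <= 0 -> exp z <= 1.
Proof. intros. rewrite <- exp_0. destruct (Req_dec z 0). subst; lra. left; apply exp_increasing; lra. Qed.

Lemma Gamma_ge1_upper x : 1 <= x ->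
  let M := x * Rpower x (x - 1) * exp (1 - x) in
  Gamma x <= M /\ (forall a b, 0 < a < b -> RInt (gf x) a b <= Gamma x).
Proof.
intros Hx M. apply Gamma_char; [lra|].
intros a b Hab.
set (c := Rpower x (x - 1) * exp (1 - x)).
assert (Hc : 0 < c) by (unfold c, Rpower; apply Rmult_lt_0_compat; apply exp_pos).
set (g := fun t => c * exp (- t / x)).
set (G := fun t => - (x * c) * exp (- t / x)).
assert (Hg : forall t, continuous g t) by (intros; apply cont_of_der; unfold g; auto_derive; auto).
apply Rle_trans with (RInt g a b).
- apply RInt_le; [lra| apply exRI; [lra|intros; apply gf_cont; lra] | apply exRI; [lra|auto] |].
  intros t Ht. unfold gf, g, c, Rpower. rewrite <- !exp_plus.
  apply exp_le_exp'.
  assert (Ht0 : 0 < t) by lra.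
  assert (H1 := ln_le_sub1 (t / x) ltac:(apply Rdiv_lt_0_compat; lra)).
  rewrite ln_div in H1 by lra.
  assert (E : (x - 1) * ln x + (1 - x) + - t / x - ((x - 1) * ln t + - t)
     = (x - 1) * (t / x - 1 - (ln t - ln x))) by (field; lra).
  assert (0 <= (x - 1) * (t / x - 1 - (ln t - ln x))) by (apply Rmult_le_pos; lra).
  lra.
- rewrite (RI_deriv G g a b); [| lra | | auto].
  + unfold G, M. fold c.
    assert (0 < exp (- b / x)) by apply exp_pos.
    assert (exp (- a / x) <= 1) by (apply exp_le_1; unfold Rdiv; assert (0 < / x) by (apply Rinv_0_lt_compat; lra); nra).
    replace (x * Rpower x (x - 1) * exp (1 - x)) with (x * c) by (unfold c; ring). assert (0 < x * c) by (apply Rmult_lt_0_compat; lra). nra.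
  + intros t Ht. unfold G, g. auto_derive; auto. unfold Rdiv. field. lra.
Qed.

Lemma exp_xm1 x t : 0 < t -> exp ((x - 1) * ln t) = exp (x * ln t) * / t.
Proof.
intros Ht. replace ((x - 1) * ln t) with (x * ln t + - ln t) by ring.
rewrite exp_plus, exp_Ropp, exp_ln; auto.
Qed.

Lemma Gamma_lt1_upper x : 0 < x <= 1 ->
  Gamma x <= 2 / x /\ (forall a b, 0 < a < b -> RInt (gf x) a b <= Gamma x).
Proof.
intros Hx. apply Gamma_char; [lra|].
intros a b Hab.
set (g := fun t => exp ((x - 1) * ln t) * exp (- t) - exp (x * ln t) * exp (- t) / x
                   + (1 + t) * exp (- t) / x).
set (G := fun t => exp (x * ln t) * exp (- t) / x - (2 + t) * exp (- t) / x).
assert (Hg : forall t, 0 < t -> continuous g t) by (intros; apply cont_of_der; unfold g; auto_derive; repeat split; lra).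
assert (Hpow : forall t, 0 < t -> exp (x * ln t) <= 1 + t).
{ intros t Ht. rewrite <- (exp_ln (1 + t)) by lra. apply exp_le_exp'.
  destruct (Rle_dec t 1).
  - assert (ln t <= 0) by (rewrite <- ln_1; apply ln_le; lra).
    assert (0 <= ln (1 + t)) by (rewrite <- ln_1; apply ln_le; lra). nra.
  - assert (0 <= ln t) by (rewrite <- ln_1; apply ln_le; lra).
    assert (ln t <= ln (1 + t)) by (apply ln_le; lra). nra. }
apply Rle_trans with (RInt g a b).
- apply RInt_le; [lra| apply exRI; [lra|intros; apply gf_cont; lra] | apply exRI; [lra|intros; apply Hg; lra] |].
  intros t Ht. unfold gf, g, Rpower.
  assert (H1 := Hpow t ltac:(lra)).
  assert (0 < exp (- t)) by apply exp_pos.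
  assert (0 < / x) by (apply Rinv_0_lt_compat; lra).
  cbv beta. unfold Rdiv. assert (0 <= exp (- t) * / x * (1 + t - exp (x * ln t))) by (apply Rmult_le_pos; nra). nra.
- rewrite (RI_deriv G g a b); [| lra | | intros; apply Hg; lra].
  + unfold G.
    assert (H1 := Hpow a ltac:(lra)). assert (H2 := Hpow b ltac:(lra)).
    assert (0 < exp (- a)) by apply exp_pos.
    assert (0 < exp (- b)) by apply exp_pos.
    assert (0 < exp (x * ln a)) by apply exp_pos.
    assert (H9 : (2 + a) * exp (- a) <= 2).
    { assert (H4 := exp_ineq1_le a). assert (exp a * exp (- a) = 1) by (rewrite <- exp_plus; replace (a + - a) with 0 by ring; apply exp_0).
      nra. }
    assert (0 < / x) by (apply Rinv_0_lt_compat; lra).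
    assert (K1 : exp (- b) * (exp (x * ln b) - 2 - b) <= 0) by nra.
    assert (K2 : 0 <= exp (x * ln a) * exp (- a)) by nra.
    assert (K3 : exp (- b) * (exp (x * ln b) - 2 - b) - exp (x * ln a) * exp (- a) + (2 + a) * exp (- a) <= 2) by lra.
    apply Rle_trans with (/ x * (exp (- b) * (exp (x * ln b) - 2 - b) - exp (x * ln a) * exp (- a) + (2 + a) * exp (- a))).
    * right. unfold Rdiv. ring.
    * unfold Rdiv. rewrite (Rmult_comm 2). apply Rmult_le_compat_l; lra.
  + intros t Ht. unfold G, g. auto_derive; [lra|]. rewrite exp_xm1 by lra. field. lra.
Qed.

Lemma ln2_le1 : ln 2 <= 1.
Proof.
rewrite <- (ln_exp 1). apply ln_le; [lra|]. generalize (exp_ineq1_le 1); lra.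
Qed.

Lemma RInt_lb (f : R -> R) a b k : a <= b -> ex_RInt f a b ->
  (forall t, a < t < b -> k <= f t) -> (b - a) * k <= RInt f a b.
Proof.
intros Hab Hex H.
assert (E : RInt (fun _ => k) a b = (b - a) * k).
{ rewrite (RInt_const (V:=R_CompleteNormedModule)). reflexivity. }
rewrite <- E. apply RInt_le; auto. apply ex_RInt_const.
Qed.

Lemma lnGamma_bound x : 0 < x ->
  0 < Gamma x /\ Rabs (ln (Gamma x) - (x * ln x - x)) <= Rabs (ln x) + 4.
Proof.
intros Hx.
destruct (Rle_dec 1 x) as [H1|H1].
- destruct (Gamma_ge1_upper x H1) as [Hu Hl].
  set (k := Rpower x (x - 1) * exp (- (x + 1))).
  assert (Hk : k <= Gamma x).
  { apply Rle_trans with (RInt (gf x) x (x + 1)); [|apply Hl; lra].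
    replace k with ((x + 1 - x) * k) by ring. apply RInt_lb; [lra| apply exRI; [lra|intros; apply gf_cont; lra]|].
    intros t Ht. unfold k, gf, Rpower.
    apply Rmult_le_compat; try (left; apply exp_pos); apply exp_le_exp'.
    - assert (ln x <= ln t) by (apply ln_le; lra). nra.
    - lra. }
  assert (Hk0 : 0 < k) by (unfold k, Rpower; apply Rmult_lt_0_compat; apply exp_pos).
  split; [lra|].
  assert (L1 : ln k <= ln (Gamma x)) by (apply ln_le; lra).
  assert (L2 : ln (Gamma x) <= ln (x * Rpower x (x - 1) * exp (1 - x))) by (apply ln_le; lra).
  unfold k, Rpower in L1, L2.
  rewrite ln_mult, ln_exp, ln_exp in L1 by apply exp_pos.
  rewrite (ln_mult (x * exp ((x - 1) * ln x))) in L2 by (first [apply exp_pos | apply Rmult_lt_0_compat; [lra|apply exp_pos]]). rewrite ln_mult, ln_exp, ln_exp in L2 by (first [apply exp_pos | lra]).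
  assert (0 <= ln x) by (rewrite <- ln_1; apply ln_le; lra).
  rewrite (Rabs_right (ln x)) by lra.
  apply Rabs_le; split; nra.
- assert (Hx1 : x <= 1) by lra.
  destruct (Gamma_lt1_upper x (conj Hx Hx1)) as [Hu Hl].
  set (k := exp (- 3)).
  assert (Hk : k <= Gamma x).
  { apply Rle_trans with (RInt (gf x) x (x + 1)); [|apply Hl; lra].
    assert (Ek : exp (-1) * exp (-2) = k) by (unfold k; rewrite <- exp_plus; f_equal; ring). replace k with ((x + 1 - x) * (exp (-1) * exp (-2))) by (rewrite Ek; ring).
    apply RInt_lb; [lra| apply exRI; [lra|intros; apply gf_cont; lra]|].
    intros t Ht. unfold gf, Rpower.
    apply Rmult_le_compat; try (left; apply exp_pos); apply exp_le_exp'; [|lra].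
    assert (ln t <= ln 2) by (apply ln_le; lra).
    assert (ln2_le1 := ln2_le1).
    destruct (Rle_dec 0 (ln t)); nra. }
  assert (Hk0 : 0 < k) by apply exp_pos.
  split; [lra|].
  assert (L1 : ln k <= ln (Gamma x)) by (apply ln_le; lra).
  assert (L2 : ln (Gamma x) <= ln (2 / x)) by (apply ln_le; lra).
  unfold k in L1. rewrite ln_exp in L1.
  unfold Rdiv in L2. rewrite ln_mult, ln_Rinv in L2 by (try apply Rinv_0_lt_compat; lra).
  assert (ln x <= 0) by (rewrite <- ln_1; apply ln_le; lra).
  assert (Hl1 : ln (/ x) <= / x - 1) by (apply ln_le_sub1; apply Rinv_0_lt_compat; lra).
  rewrite ln_Rinv in Hl1 by lra.
  assert (x * ln x >= x - 1).
  { assert (x * (- ln x) <= x * (/ x - 1)) by (apply Rmult_le_compat_l; lra).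
    assert (x * / x = 1) by (field; lra). nra. }
  assert (ln2_le1 := ln2_le1).
  rewrite (Rabs_left1 (ln x)) by lra.
  apply Rabs_le; split; nra.
Qed.

Lemma ln2_ge_half : / 2 <= ln 2.
Proof.
left. rewrite <- (ln_exp (/ 2)). apply ln_increasing; [apply exp_pos|].
assert (E : exp (/ 2) * exp (/ 2) = exp 1) by (rewrite <- exp_plus; f_equal; field).
assert (exp 1 <= 3) by apply exp_le_3.
assert (0 < exp (/ 2)) by apply exp_pos. nra.
Qed.

Lemma ln_sq1_le (n : R) : 2 <= n -> ln (n * n + 1) <= 3 * ln n.
Proof.
intros Hn. replace (3 * ln n) with (ln (n * n * n)).
- apply ln_le; nra.
- rewrite !ln_mult by nra. ring.
Qed.

Lemma xlnx_pos x : 0 < x -> xlnx x = x * ln x.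
Proof. intros. unfold xlnx. destruct (Req_EM_T x 0); [lra|auto]. Qed.

Lemma xlnx_0 : xlnx 0 = 0.
Proof. unfold xlnx. destruct (Req_EM_T 0 0); [auto|lra]. Qed.

Definition Dg (g : R) := 2 * ((1 + g) * (Rabs (ln g) + ln (1 + g)) + 4 + g) + 3 * (1 + g).

Lemma shift_bound (n m g : R) : 2 <= n -> 0 <= m <= n * n -> 0 < g ->
  0 < Gamma (m + g) /\ Rabs (ln (Gamma (m + g)) - (xlnx m - m)) <= Dg g * ln n.
Proof.
intros Hn Hm Hg.
set (y := m + g).
assert (Hy : 0 < y) by (unfold y; lra).
destruct (lnGamma_bound y Hy) as [HG HB]. split; auto.
set (L := ln n).
assert (HL : / 2 <= L) by (apply Rle_trans with (ln 2); [apply ln2_ge_half| apply ln_le; lra]).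
assert (Hly : Rabs (ln y) <= Rabs (ln g) + ln (1 + g) + 3 * L).
{ assert (H1 : ln (n * n + 1) <= 3 * L) by (apply ln_sq1_le; auto).
  assert (0 <= ln (1 + g)) by (rewrite <- ln_1; apply ln_le; lra).
  assert (0 <= ln (n * n + 1)) by (rewrite <- ln_1; apply ln_le; nra).
  destruct (Rle_dec 0 (ln y)).
  - rewrite Rabs_right by lra.
    assert (ln y <= ln ((n * n + 1) * (1 + g))) by (apply ln_le; unfold y; nra).
    rewrite ln_mult in H2 by nra. generalize (Rabs_pos (ln g)). lra.
  - rewrite Rabs_left by lra.
    assert (ln g <= ln y) by (apply ln_le; unfold y; lra).
    generalize (Rabs_pos (ln g)). intros.
    assert (- ln g <= Rabs (ln g)) by (rewrite <- Rabs_Ropp; apply RRle_abs). lra. }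
assert (Hphi : Rabs ((y * ln y - y) - (xlnx m - m)) <= g * Rabs (ln y) + g).
{ destruct (Req_dec m 0) as [->|Hm0].
  - rewrite xlnx_0. unfold y. rewrite Rplus_0_l.
    replace (g * ln g - g - (0 - 0)) with (g * ln g - g) by ring.
    eapply Rle_trans; [apply Rabs_triang|]. rewrite Rabs_mult, Rabs_Ropp, (Rabs_right g) by lra. lra.
  - assert (Hm1 : 0 < m) by lra.
    rewrite xlnx_pos by auto.
    assert (H1 := ln_le_sub1 (y / m) ltac:(apply Rdiv_lt_0_compat; lra)).
    assert (H2 : 0 <= ln (y / m)) by (rewrite <- ln_1; apply ln_le; [lra|]; apply (Rmult_le_reg_r m); [lra|]; unfold Rdiv; rewrite Rmult_assoc, Rinv_l, Rmult_1_r; unfold y; lra).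
    rewrite ln_div in H1, H2 by lra.
    assert (E : y * ln y - y - (m * ln m - m) = m * (ln y - ln m) + g * ln y - g) by (unfold y; ring).
    rewrite E.
    assert (Hmy : m * (ln y - ln m) <= g).
    { assert (m * (ln y - ln m) <= m * (y / m - 1)) by (apply Rmult_le_compat_l; lra).
      assert (m * (y / m - 1) = g) by (unfold y; field; lra). lra. }
    assert (0 <= m * (ln y - ln m)) by (apply Rmult_le_pos; lra).
    assert (HH3 : Rabs (g * ln y) = g * Rabs (ln y)) by (rewrite Rabs_mult, Rabs_right; lra).
    apply Rabs_le. generalize (proj1 (Rabs_le_between (g * ln y) (g * Rabs (ln y))) (Req_le _ _ HH3)).
    intros [A B]. split; lra. }
assert (T : Rabs (ln (Gamma y) - (xlnx m - m)) <= (1 + g) * Rabs (ln y) + 4 + g).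
{ replace (ln (Gamma y) - (xlnx m - m)) with ((ln (Gamma y) - (y * ln y - y)) + ((y * ln y - y) - (xlnx m - m))) by ring.
  eapply Rle_trans; [apply Rabs_triang|]. lra. }
unfold Dg. fold L. 
assert (0 <= Rabs (ln g) + ln (1 + g)).
{ assert (0 <= ln (1 + g)) by (rewrite <- ln_1; apply ln_le; lra). generalize (Rabs_pos (ln g)); lra. }
assert ((1 + g) * Rabs (ln y) <= (1 + g) * (Rabs (ln g) + ln (1 + g) + 3 * L)) by (apply Rmult_le_compat_l; lra).
set (c := Rabs (ln g) + ln (1 + g)) in *.
assert (X : ((1 + g) * c + 4 + g) * 1 <= ((1 + g) * c + 4 + g) * (2 * L)).
{ apply Rmult_le_compat_l; [|lra]. assert (0 <= (1 + g) * c) by (apply Rmult_le_pos; lra). lra. }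
eapply Rle_trans; [exact T|]. lra.
Qed.

Lemma xlnx_div N y : 0 < N -> 0 <= y -> N * xlnx (y / N) = xlnx y - y * ln N.
Proof.
intros HN Hy. destruct (Req_dec y 0) as [->|Hy0].
- unfold Rdiv. rewrite Rmult_0_l, xlnx_0. ring.
- rewrite !xlnx_pos by (try apply Rdiv_lt_0_compat; lra).
  rewrite ln_div by lra. field. lra.
Qed.

Lemma qml_term N p : 0 <= p <= N ->
  (if Req_EM_T N 0 then 0 else N * tau (p / N)) = xlnx p + xlnx (N - p) - xlnx N.
Proof.
intros Hp. destruct (Req_EM_T N 0) as [->|HN].
- assert (p = 0) by lra. subst. replace (0 - 0) with 0 by ring. rewrite xlnx_0. ring.
- assert (HN0 : 0 < N) by lra. unfold tau.
  replace (1 - p / N) with ((N - p) / N) by (field; lra).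
  rewrite Rmult_plus_distr_l, !xlnx_div by lra.
  rewrite (xlnx_pos N) by lra. ring.
Qed.

Lemma abs3 a b c : Rabs (a + b - c) <= Rabs a + Rabs b + Rabs c.
Proof.
eapply Rle_trans; [apply Rabs_triang|]. rewrite Rabs_Ropp.
generalize (Rabs_triang a b). lra.
Qed.

Lemma pair_bound n p N b1 b2 : 2 <= n -> 0 <= p <= N -> N <= n * n -> 0 < b1 -> 0 < b2 ->
  Rabs (ln (Beta (p + b1) (N - p + b2)) - (if Req_EM_T N 0 then 0 else N * tau (p / N)))
    <= (Dg b1 + Dg b2 + Dg (b1 + b2)) * ln n.
Proof.
intros Hn Hp HN H1 H2.
destruct (shift_bound n p b1 Hn ltac:(lra) H1) as [G1 B1].
destruct (shift_bound n (N - p) b2 Hn ltac:(lra) H2) as [G2 B2].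
destruct (shift_bound n N (b1 + b2) Hn ltac:(lra) ltac:(lra)) as [G3 B3].
rewrite qml_term by lra. unfold Beta.
replace (p + b1 + (N - p + b2)) with (N + (b1 + b2)) by ring.
unfold Rdiv. rewrite ln_mult, ln_mult, ln_Rinv by (try apply Rinv_0_lt_compat; try apply Rmult_lt_0_compat; lra).
match goal with |- Rabs ?e <= _ => replace e with
  ((ln (Gamma (p + b1)) - (xlnx p - p)) + (ln (Gamma (N - p + b2)) - (xlnx (N - p) - (N - p)))
   - (ln (Gamma (N + (b1 + b2))) - (xlnx N - N))) by ring end.
eapply Rle_trans; [apply abs3|]. lra.
Qed.

Lemma xlnx_small m : 0 <= m < 3 -> Rabs (xlnx m) <= 6.
Proof.
intros Hm. destruct (Req_dec m 0) as [->|Hm0]; [rewrite xlnx_0, Rabs_R0; lra|].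
rewrite xlnx_pos by lra.
assert (H1 := ln_le_sub1 m ltac:(lra)).
assert (H2 := ln_le_sub1 (/ m) ltac:(apply Rinv_0_lt_compat; lra)).
rewrite ln_Rinv in H2 by lra.
assert (m * ln m <= m * (m - 1)) by (apply Rmult_le_compat_l; lra).
assert (m * (- ln m) <= m * (/ m - 1)) by (apply Rmult_le_compat_l; lra).
assert (m * / m = 1) by (field; lra).
apply Rabs_le; split; nra.
Qed.

Lemma class_bound n m alpha : 2 <= n -> 0 <= m <= n -> 0 < alpha ->
  Rabs (ln (Gamma (m + alpha)) - (if Rle_dec 2 (m + IZR (Int_part alpha)) then xlnx m else 0) + m)
    <= (Dg alpha + 12) * ln n.
Proof.
intros Hn Hm Ha.
destruct (shift_bound n m alpha Hn ltac:(nra) Ha) as [_ B].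
assert (HL : / 2 <= ln n) by (apply Rle_trans with (ln 2); [apply ln2_ge_half| apply ln_le; lra]).
destruct (Rle_dec 2 (m + IZR (Int_part alpha))).
- replace (ln (Gamma (m + alpha)) - xlnx m + m) with (ln (Gamma (m + alpha)) - (xlnx m - m)) by ring. lra.
- destruct (base_Int_part alpha) as [_ HI].
  assert (Hs := xlnx_small m ltac:(lra)).
  replace (ln (Gamma (m + alpha)) - 0 + m) with ((ln (Gamma (m + alpha)) - (xlnx m - m)) + xlnx m) by ring.
  eapply Rle_trans; [apply Rabs_triang|]. lra.
Qed.
Open Scope bool_scope.
Open Scope R_scope.
Open Scope bool_scope.
Open Scope R_scope.

Lemma rsum_ext n f g : (forall i, (i < n)%nat -> f i = g i) -> rsum n f = rsum n g.
Proof. induction n; simpl; intros H; auto. rewrite IHn, H; auto. Qed.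

Lemma rsum_le n f g : (forall i, (i < n)%nat -> f i <= g i) -> rsum n f <= rsum n g.
Proof. induction n; simpl; intros H; [lra|]. assert (f n <= g n) by auto. assert (rsum n f <= rsum n g) by auto. lra. Qed.

Lemma rsum_plus n f g : rsum n (fun i => f i + g i) = rsum n f + rsum n g.
Proof. induction n; simpl; [ring|]. rewrite IHn; ring. Qed.

Lemma rsum_minus n f g : rsum n (fun i => f i - g i) = rsum n f - rsum n g.
Proof. induction n; simpl; [ring|]. rewrite IHn; ring. Qed.

Lemma rsum_scal n c f : rsum n (fun i => c * f i) = c * rsum n f.
Proof. induction n; simpl; [ring|]. rewrite IHn; ring. Qed.

Lemma rsum_scal_r n c f : rsum n (fun i => f i * c) = rsum n f * c.
Proof. induction n; simpl; [ring|]. rewrite IHn; ring. Qed.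

Lemma rsum_const n c : rsum n (fun _ => c) = INR n * c.
Proof. induction n; simpl rsum; [simpl; ring|]. rewrite IHn, S_INR; ring. Qed.

Lemma rsum_abs n f c : (forall i, (i < n)%nat -> Rabs (f i) <= c) -> Rabs (rsum n f) <= INR n * c.
Proof.
induction n; simpl rsum; intros H; [simpl; rewrite Rabs_R0; lra|].
rewrite S_INR. eapply Rle_trans; [apply Rabs_triang|].
assert (Rabs (f n) <= c) by auto. assert (Rabs (rsum n f) <= INR n * c) by auto. lra.
Qed.

Lemma rsum_exch n m f : rsum n (fun i => rsum m (fun j => f i j)) = rsum m (fun j => rsum n (fun i => f i j)).
Proof.
induction n; simpl.
- induction m; simpl; auto. rewrite <- IHm; ring.
- rewrite IHn, <- rsum_plus. auto.
Qed.

Lemma ind_bounds b : 0 <= ind b <= 1.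
Proof. destruct b; simpl; lra. Qed.

Lemma ind_sq b : ind b * (ind b - 1) = 0.
Proof. destruct b; simpl; ring. Qed.

Lemma n_a_bounds n e a : 0 <= n_a n e a <= INR n.
Proof.
unfold n_a. induction n; simpl rsum; [simpl; lra|].
rewrite S_INR. generalize (ind_bounds (Nat.eqb (e n) a)); lra.
Qed.

Lemma ind_count K v : rsum K (fun a' => ind (Nat.eqb v (S a'))) = if ((1 <=? v)%nat && (v <=? K)%nat) then 1 else 0.
Proof.
induction K as [|K IHK]; simpl rsum.
- destruct v; reflexivity.
- rewrite IHK.
  destruct (Nat.eqb_spec v (S K)) as [->|Hne]; simpl ind.
  + replace ((1 <=? S K)%nat && (S K <=? K)%nat) with false.
    replace ((1 <=? S K)%nat && (S K <=? S K)%nat) with true. ring.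
    * symmetry. apply andb_true_iff. split; apply Nat.leb_le; lia.
    * symmetry. apply andb_false_iff. right. apply Nat.leb_gt. lia.
  + destruct (1 <=? v)%nat%nat eqn:E1; simpl; [|ring].
    destruct (v <=? K)%nat%nat eqn:E2; destruct (v <=? S K)%nat%nat eqn:E3; try ring.
    * apply Nat.leb_le in E2. apply Nat.leb_gt in E3. lia.
    * apply Nat.leb_gt in E2. apply Nat.leb_le in E3. lia.
Qed.

Lemma sum_n_a n K e : labelling n K e -> sum_classes K (fun a => n_a n e a) = INR n.
Proof.
intros Hl. unfold sum_classes, n_a.
rewrite <- rsum_exch.
rewrite (rsum_ext n _ (fun _ => 1)).
- rewrite rsum_const; ring.
- intros i Hi. rewrite ind_count. destruct (Hl i Hi).
  replace ((1 <=? e i)%nat && (e i <=? K)%nat) with true; auto.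
  symmetry. apply andb_true_iff. split; apply Nat.leb_le; lia.
Qed.

Lemma triangle_count n (c : nat -> R) : (forall i, c i * (c i - 1) = 0) ->
  rsum n (fun j => c j * rsum j c) = rsum n c * (rsum n c - 1) / 2.
Proof.
intros Hc. induction n; simpl; [field|]. rewrite IHn.
generalize (Hc n). intros. nra.
Qed.

Lemma O_bounds n A e a b : adjacency n A ->
  0 <= O_ab n A e a b <= n_ab n e a b.
Proof.
intros [H01 [Hsym Hdiag]].
assert (HA : forall i j, (i < n)%nat -> (j < n)%nat -> 0 <= A i j <= 1).
{ intros i j Hi Hj. destruct (H01 i j Hi Hj) as [-> | ->]; lra. }
unfold O_ab, n_ab. destruct (Nat.eqb a b).
- split.
  + apply Rle_trans with (rsum n (fun _ => 0)); [rewrite rsum_const; lra|].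
    apply rsum_le; intros j Hj. apply Rle_trans with (rsum j (fun _ => 0)); [rewrite rsum_const; lra|].
    apply rsum_le; intros i Hi.
    generalize (HA i j ltac:(lia) Hj) (ind_bounds (Nat.eqb (e i) a)) (ind_bounds (Nat.eqb (e j) a)).
    intros. apply Rmult_le_pos; [apply Rmult_le_pos|]; lra.
  + unfold n_a. rewrite <- triangle_count by (intros; apply ind_sq).
    apply rsum_le; intros j Hj. rewrite Rmult_comm, <- rsum_scal_r.
    apply rsum_le; intros i Hi.
    generalize (HA i j ltac:(lia) Hj) (ind_bounds (Nat.eqb (e i) a)) (ind_bounds (Nat.eqb (e j) a)).
    intros. assert (0 <= ind (Nat.eqb (e i) a) * ind (Nat.eqb (e j) a)) by (apply Rmult_le_pos; lra). nra.
- split.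
  + apply Rle_trans with (rsum n (fun _ => 0)); [rewrite rsum_const; lra|].
    apply rsum_le; intros i Hi. apply Rle_trans with (rsum n (fun _ => 0)); [rewrite rsum_const; lra|].
    apply rsum_le; intros j Hj.
    generalize (HA i j Hi Hj) (ind_bounds (Nat.eqb (e i) a)) (ind_bounds (Nat.eqb (e j) b)).
    intros. apply Rmult_le_pos; [apply Rmult_le_pos|]; lra.
  + unfold n_a. rewrite <- rsum_scal_r.
    apply rsum_le; intros i Hi. rewrite <- rsum_scal.
    apply rsum_le; intros j Hj.
    generalize (HA i j Hi Hj) (ind_bounds (Nat.eqb (e i) a)) (ind_bounds (Nat.eqb (e j) b)).
    intros. assert (0 <= ind (Nat.eqb (e i) a) * ind (Nat.eqb (e j) b)) by (apply Rmult_le_pos; lra). nra.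
Qed.

Lemma n_ab_le n e a b : n_ab n e a b <= INR n * INR n.
Proof.
generalize (n_a_bounds n e a) (n_a_bounds n e b). intros.
unfold n_ab. destruct (Nat.eqb a b); nra.
Qed.

Lemma sp_minus K f g : sum_pairs K (fun a b => f a b - g a b) = sum_pairs K f - sum_pairs K g.
Proof.
unfold sum_pairs. rewrite <- rsum_minus. apply rsum_ext. intros. apply rsum_minus.
Qed.

Lemma sc_comb K f g h : sum_classes K (fun a => f a - g a + h a) = sum_classes K f - sum_classes K g + sum_classes K h.
Proof.
unfold sum_classes. rewrite rsum_plus, rsum_minus. reflexivity.
Qed.

Lemma sp_abs K f c : 0 <= c -> (forall a b, Rabs (f a b) <= c) -> Rabs (sum_pairs K f) <= INR K * (INR K * c).
Proof.
intros Hc H. unfold sum_pairs. apply rsum_abs. intros b Hb.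
eapply Rle_trans; [apply rsum_abs; intros; apply H|].
apply Rmult_le_compat_r; auto. apply le_INR. lia.
Qed.

Lemma sc_abs K f c : (forall a, Rabs (f a) <= c) -> Rabs (sum_classes K f) <= INR K * c.
Proof. intros H. unfold sum_classes. apply rsum_abs. intros; apply H. Qed.

Lemma Dg_pos g : 0 < g -> 0 <= Dg g.
Proof.
intros. unfold Dg. assert (0 <= ln (1 + g)) by (rewrite <- ln_1; apply ln_le; lra).
generalize (Rabs_pos (ln g)). intros. assert (0 <= (1 + g) * (Rabs (ln g) + ln (1 + g))) by (apply Rmult_le_pos; lra). lra.
Qed.

Definition Cmain (K : nat) (alpha b1 b2 : R) :=
  INR K * (INR K * (Dg b1 + Dg b2 + Dg (b1 + b2))) + INR K * (Dg alpha + 12).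

Lemma main1 (K : nat) (alpha b1 b2 : R) :
  0 < alpha -> 0 < b1 -> 0 < b2 ->
  forall (n : nat) (A : nat -> nat -> R), (2 <= n)%nat -> adjacency n A ->
     forall e : nat -> nat, labelling n K e ->
       Rabs (Q_B n K alpha b1 b2 A e - Q_ML n K A e - Q_P n K alpha e)
         <= Cmain K alpha b1 b2 * ln (INR n) / (INR n ^ 2).
Proof.
intros Ha H1 H2 n A Hn HA e He.
set (nr := INR n).
assert (Hnr : 2 <= nr) by (unfold nr; replace 2 with (INR 2) by (simpl; ring); apply le_INR; auto).
set (L := ln nr).
assert (HL : 0 <= L) by (unfold L; rewrite <- ln_1; apply ln_le; lra).
assert (E : Q_B n K alpha b1 b2 A e - Q_ML n K A e - Q_P n K alpha e =
  / (nr ^ 2) * (sum_pairs K (fun a b => ln (Beta (O_ab n A e a b + b1) (n_ab n e a b - O_ab n A e a b + b2))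
      - (if Req_EM_T (n_ab n e a b) 0 then 0 else n_ab n e a b * tau (O_ab n A e a b / n_ab n e a b)))
   + sum_classes K (fun a => ln (Gamma (n_a n e a + alpha)) -
        (if Rle_dec 2 (n_a n e a + IZR (Int_part alpha)) then xlnx (n_a n e a) else 0) + n_a n e a))).
{ rewrite sp_minus, sc_comb, sum_n_a by auto. unfold Q_B, Q_ML, Q_P. fold nr. field. lra. }
rewrite E. unfold Rdiv. rewrite Rabs_mult, Rabs_right by (apply Rle_ge; left; apply Rinv_0_lt_compat, pow_lt; lra).
rewrite Rmult_comm. apply Rmult_le_compat_r; [left; apply Rinv_0_lt_compat, pow_lt; lra|].
unfold Cmain. rewrite Rmult_plus_distr_r.
eapply Rle_trans; [apply Rabs_triang|]. apply Rplus_le_compat.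
- replace (INR K * (INR K * (Dg b1 + Dg b2 + Dg (b1 + b2))) * L) with (INR K * (INR K * ((Dg b1 + Dg b2 + Dg (b1 + b2)) * L))) by ring.
  apply sp_abs.
  + apply Rmult_le_pos; auto. generalize (Dg_pos b1 H1) (Dg_pos b2 H2) (Dg_pos (b1 + b2) ltac:(lra)); lra.
  + intros a b. destruct (O_bounds n A e a b HA).
    apply pair_bound; auto. apply n_ab_le.
- replace (INR K * (Dg alpha + 12) * L) with (INR K * ((Dg alpha + 12) * L)) by ring.
  apply sc_abs. intros a. apply class_bound; auto. apply n_a_bounds.
Qed.

Lemma xlnx_big m nr : 1 <= nr -> 0 <= m <= nr -> Rabs (xlnx m) <= nr * ln nr + 1.
Proof.
intros Hn Hm. assert (0 <= ln nr) by (rewrite <- ln_1; apply ln_le; lra).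
destruct (Req_dec m 0) as [->|Hm0]; [rewrite xlnx_0, Rabs_R0; nra|].
rewrite xlnx_pos by lra.
assert (ln m <= ln nr) by (apply ln_le; lra).
assert (H2 := ln_le_sub1 (/ m) ltac:(apply Rinv_0_lt_compat; lra)).
rewrite ln_Rinv in H2 by lra.
assert (m * (- ln m) <= m * (/ m - 1)) by (apply Rmult_le_compat_l; lra).
assert (m * / m = 1) by (field; lra).
apply Rabs_le; split; nra.
Qed.

Lemma main2 (K : nat) (alpha b1 b2 : R) :
  0 < alpha -> 0 < b1 -> 0 < b2 ->
  forall (n : nat) (A : nat -> nat -> R), (2 <= n)%nat -> adjacency n A ->
     forall e : nat -> nat, labelling n K e ->
       Rabs (Q_B n K alpha b1 b2 A e - Q_ML n K A e)
         <= (Cmain K alpha b1 b2 + 3 * INR K + 2) * ln (INR n) / INR n.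
Proof.
intros Ha H1 H2 n A Hn HA e He.
assert (M := main1 K alpha b1 b2 Ha H1 H2 n A Hn HA e He).
set (nr := INR n) in *.
assert (Hnr : 2 <= nr) by (unfold nr; replace 2 with (INR 2) by (simpl; ring); apply le_INR; auto).
set (L := ln nr) in *.
assert (HL : / 2 <= L) by (apply Rle_trans with (ln 2); [apply ln2_ge_half| apply ln_le; lra]).
set (C := Cmain K alpha b1 b2) in *.
assert (HC : 0 <= C).
{ unfold C, Cmain. generalize (pos_INR K) (Dg_pos b1 H1) (Dg_pos b2 H2) (Dg_pos (b1 + b2) ltac:(lra)) (Dg_pos alpha Ha). intros.
  assert (0 <= INR K * (Dg b1 + Dg b2 + Dg (b1 + b2))) by (apply Rmult_le_pos; lra).
  assert (0 <= INR K * (INR K * (Dg b1 + Dg b2 + Dg (b1 + b2)))) by (apply Rmult_le_pos; lra).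
  assert (0 <= INR K * (Dg alpha + 12)) by (apply Rmult_le_pos; lra). lra. }
assert (HP : Rabs (Q_P n K alpha e) <= / (nr ^ 2) * (INR K * (nr * L + 1)) + / nr).
{ unfold Q_P. fold nr. eapply Rle_trans; [apply Rabs_triang|]. rewrite Rabs_Ropp.
  rewrite Rabs_mult, (Rabs_right (/ nr)), Rabs_right by (apply Rle_ge; left; try apply Rinv_0_lt_compat; try apply pow_lt; lra).
  apply Rplus_le_compat_r. apply Rmult_le_compat_l; [left; apply Rinv_0_lt_compat, pow_lt; lra|].
  apply sc_abs. intros a. destruct (Rle_dec _ _).
  - apply xlnx_big; [lra|]. apply n_a_bounds.
  - rewrite Rabs_R0. generalize (pos_INR K). intros. assert (0 <= L) by lra. nra. }
set (u := / nr).
assert (Hu : 0 < u <= / 2) by (unfold u; split; [apply Rinv_0_lt_compat; lra| apply Rinv_le_contravar; lra]).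
assert (Hu2 : / (nr ^ 2) = u * u) by (unfold u; field; lra).
assert (Hnu : nr * u = 1) by (unfold u; field; lra).
rewrite Hu2 in HP. unfold Rdiv in M |- *. rewrite Hu2 in M. fold u.
replace (Q_B n K alpha b1 b2 A e - Q_ML n K A e) with ((Q_B n K alpha b1 b2 A e - Q_ML n K A e - Q_P n K alpha e) + Q_P n K alpha e) by ring.
eapply Rle_trans; [apply Rabs_triang|].
generalize (pos_INR K). intros HK.
assert (X1 : C * L * (u * u) <= C * L * u) by (assert (0 <= C * L) by (apply Rmult_le_pos; lra); apply Rmult_le_compat_l; nra).
assert (X2 : u * u * (INR K * (nr * L + 1)) = INR K * L * u + INR K * (u * u)) by (transitivity (INR K * L * u * (nr * u) + INR K * (u * u)); [ring | rewrite Hnu; ring]).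
assert (X3 : INR K * (u * u) <= INR K * (2 * L * u)) by (apply Rmult_le_compat_l; nra). fold u in HP.
assert (X4 : u <= 2 * L * u) by nra.
nra.
Qed.

Theorem lemma3p1 (K : nat) (alpha b1 b2 : R) :
  (1 <= K)%nat -> 0 < alpha -> 0 < b1 -> 0 < b2 ->
  (exists C : R, forall (n : nat) (A : nat -> nat -> R), (2 <= n)%nat -> adjacency n A ->
     forall e : nat -> nat, labelling n K e ->
       Rabs (Q_B n K alpha b1 b2 A e - Q_ML n K A e - Q_P n K alpha e)
         <= C * ln (INR n) / (INR n ^ 2))
  /\
  (exists C' : R, forall (n : nat) (A : nat -> nat -> R), (2 <= n)%nat -> adjacency n A ->
     forall e : nat -> nat, labelling n K e ->
       Rabs (Q_B n K alpha b1 b2 A e - Q_ML n K A e) <= C' * ln (INR n) / INR n).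
Proof.
intros HK Ha H1 H2. split.
- exists (Cmain K alpha b1 b2). apply main1; auto.
- exists (Cmain K alpha b1 b2 + 3 * INR K + 2). apply main2; auto.
Qed.
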